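(* Let $\lambda<0$, $C>0$ and $e_0>0$ be real numbers, and define for $t\ge 0$ $$\delta(t)=\Big(e_0^2 e^{\lambda t}+\frac{C^2}{\lambda^2}\Big(t^2+\frac{2t}{\lambda}+\frac{2}{\lambda^2}\big(1-e^{\lambda t}\big)\Big)\Big)^{1/2}.$$ Let $G=\frac{\sqrt{3}\,e_0|\lambda|}{C}$ and let $\alpha=1+\frac{|\lambda|G}{4}-\sqrt{1+\big(\frac{\lambda G}{4}\big)^2}$, which is the smallest positive root of $-\frac12|\lambda|G+\big(2+\frac12|\lambda|G\big)\alpha-\alpha^2=0$. Suppose $\frac{|\lambda|G}{4}<1$. Then $0<\alpha<1$, and $\delta(t)\le e_0$ for all $t\in[0,G(1-\alpha)]$.
   Context: In the paper this is applied with $\lambda=\lambda_u$, the (negative) one-sided Lipschitz constant of a vector field $f_u$ on $S=[0,1]^M$, and $C=C_u=\sup_{y\in S}L_u\|f_u(y)\|$ where $L_u$ is the Lipschitz constant of $f_u$ on $S$; then $\delta(t)$ is the error bound $\delta^u_{t,e_0}$ between the exact solution of $dy/dt=f_u(y)$ and its explicit Euler approximation $z_0+t f_u(z_0)$ with initial error $e_0=\|y_0-z_0\|$. *)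

(* Defs.v *)
From Stdlib Require Import Reals Lra.
Open Scope R_scope.

Definition delta (lam C e0 t : R) : R :=
  sqrt (e0 ^ 2 * exp (lam * t)
        + C ^ 2 / lam ^ 2 * (t ^ 2 + 2 * t / lam + 2 / lam ^ 2 * (1 - exp (lam * t)))).

Definition Gval (lam C e0 : R) : R := sqrt 3 * e0 * Rabs lam / C.

Definition alpha (lam C e0 : R) : R :=
  1 + Rabs lam * Gval lam C e0 / 4 - sqrt (1 + (lam * Gval lam C e0 / 4) ^ 2).

(* Main.v *)
Require Import Defs.
From Stdlib Require Import Reals Lra Psatz.
From Coquelicot Require Import Coquelicot.
Open Scope R_scope.

Lemma mono0 (f df : R -> R) :
  (forall x, is_derive f x (df x)) -> (forall x, 0 <= x -> 0 <= df x) ->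
  forall s, 0 <= s -> f 0 <= f s.
Proof.
  intros Hd Hp s hs.
  destruct (MVT_gen f 0 s df) as [c [hc e]].
  - intros x _. apply Hd.
  - intros x _. apply continuity_pt_filterlim. apply (@ex_derive_continuous R_AbsRing R_NormedModule).
    eexists; apply Hd.
  - rewrite Rmin_left in hc by lra. rewrite Rmax_right in hc by lra.
    assert (0 <= df c) by (apply Hp; lra). nra.
Qed.

Lemma L1 s : 0 <= s -> exp (- s) <= 1 - s + s^2/2.
Proof.
  intros hs.
  assert (H := mono0 (fun x => 1 - x + x^2/2 - exp (- x)) (fun x => -1 + x + exp (- x))).
  simpl in H. rewrite Ropp_0, exp_0 in H.
  assert (1 - 0 + 0*(0*1)/2 - 1 <= 1 - s + s*(s*1)/2 - exp (-s)).
  { apply H; auto.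
    - intro x; change R in x; auto_derive; [exact I| nra].
    - intros x _. pose proof (exp_ineq1_le (- x)). lra. }
  lra.
Qed.

Lemma L2 s : 0 <= s -> 1 - s + s^2/2 - s^3/6 <= exp (- s).
Proof.
  intros hs.
  assert (H := mono0 (fun x => exp (- x) - 1 + x - x^2/2 + x^3/6)
                     (fun x => - exp (- x) + 1 - x + x^2/2)).
  simpl in H. rewrite Ropp_0, exp_0 in H.
  assert (1 - 1 + 0 - 0*(0*1)/2 + 0*(0*(0*1))/6 <= exp (-s) - 1 + s - s*(s*1)/2 + s*(s*(s*1))/6).
  { apply H; auto.
    - intro x; change R in x; auto_derive; [exact I| nra].
    - intros x hx. pose proof (L1 x hx). simpl in *. lra. }
  simpl. lra.
Qed.

Theorem lemma1 (lam C e0 : R) (hlam : lam < 0) (hC : 0 < C) (he0 : 0 < e0)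
  (hsmall : Rabs lam * Gval lam C e0 / 4 < 1) :
  (0 < alpha lam C e0 < 1) /\
  (forall t : R, 0 <= t <= Gval lam C e0 * (1 - alpha lam C e0) ->
     delta lam C e0 t <= e0).
Proof.
  set (m := - lam).
  assert (hm : 0 < m) by (unfold m; lra).
  assert (hab : Rabs lam = m) by (unfold m; apply Rabs_left; lra).
  assert (hlm : lam = - m) by (unfold m; ring).
  assert (h3 : sqrt 3 * sqrt 3 = 3) by (apply sqrt_sqrt; lra).
  assert (h3p : 0 < sqrt 3) by (apply sqrt_lt_R0; lra).
  assert (hGC : Gval lam C e0 * C = sqrt 3 * e0 * m).
  { unfold Gval. rewrite hab. field. lra. }
  set (G := Gval lam C e0) in *.
  assert (hG : 0 < G).
  { assert (0 < G * C) by (rewrite hGC; apply Rmult_lt_0_compat; [apply Rmult_lt_0_compat|]; lra).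
    nra. }
  set (g := m * G).
  assert (hg : 0 < g) by (unfold g; nra).
  assert (hg2 : g * g * (C * C) = 3 * (e0 * e0) * (m*m*m*m)).
  { unfold g. replace (m * G * (m * G) * (C * C)) with (m*m*((G*C)*(G*C))) by ring.
    rewrite hGC. replace (m * m * (sqrt 3 * e0 * m * (sqrt 3 * e0 * m)))
      with ((sqrt 3 * sqrt 3) * (e0*e0) * (m*m*m*m)) by ring. rewrite h3. ring. }
  assert (hal : alpha lam C e0 = 1 + g/4 - sqrt (1 + (g/4)^2)).
  { unfold alpha. fold G. rewrite hab. replace ((lam * G / 4) ^ 2) with ((m * G / 4) ^ 2) by (unfold m; field). reflexivity. }
  set (r := sqrt (1 + (g/4)^2)) in *.
  assert (hr2 : r * r = 1 + (g/4)^2) by (apply sqrt_sqrt; nra).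
  assert (hr0 : 0 <= r) by apply sqrt_pos.
  assert (hrg : g/4 < r) by nra.
  assert (hrg2 : r < 1 + g/4) by nra.
  rewrite hal. split; [lra|].
  intros t [ht0 ht1].
  set (s := m * t).
  assert (hs0 : 0 <= s) by (unfold s; nra).
  assert (hs1 : s <= g * (r - g/4)).
  { assert (H1 : m*t <= m*(G*(1-(1+g/4-r)))) by (apply Rmult_le_compat_l; lra).
    unfold s. apply Rle_trans with (1:=H1). right. unfold g. field. }
  assert (hcl : s * s + g * g * s / 2 - g * g <= 0).
  { assert (hq : 0 <= s + g*g/4 <= g * r) by nra.
    assert ((s + g*g/4) * (s + g*g/4) <= (g*r)*(g*r)) by (apply Rmult_le_compat; lra).
    nra. }
  assert (hcub : s*s*s <= g*g*(s - s*s/2)) by nra.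
  set (E := exp (- s)).
  pose proof (L1 s hs0) as HL1. pose proof (L2 s hs0) as HL2. fold E in HL1, HL2.
  unfold delta. apply Rle_trans with (sqrt (e0 ^ 2)).
  2:{ rewrite sqrt_pow2; lra. }
  apply sqrt_le_1_alt.
  replace (lam * t) with (- s) by (unfold s; rewrite hlm; ring). fold E.
  replace (C ^ 2 / lam ^ 2 * (t ^ 2 + 2 * t / lam + 2 / lam ^ 2 * (1 - E)))
    with (C * C / (m*m*m*m) * (s*s - 2*s + 2*(1 - E))).
  2:{ unfold s. rewrite hlm. field. lra. }
  assert (hF : s*s - 2*s + 2*(1-E) <= s*s*s/3) by (simpl in HL2; nra).
  assert (hK : C*C*(s*s - 2*s + 2*(1-E)) <= e0*e0*(m*m*m*m)*(1-E)).
  { assert (hCC : 0 < C*C) by nra.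
    assert (C*C*(s*s - 2*s + 2*(1-E)) <= C*C*(s*s*s/3)) by (apply Rmult_le_compat_l; lra).
    assert (C*C*(s*s*s) <= C*C*(g*g*(s - s*s/2))) by (apply Rmult_le_compat_l; lra).
    assert (hm4 : 0 < m*m*m*m) by (repeat apply Rmult_lt_0_compat; lra).
    assert (0 <= e0*e0*(m*m*m*m)) by nra.
    assert (e0*e0*(m*m*m*m)*(s - s*s/2) <= e0*e0*(m*m*m*m)*(1-E))
      by (apply Rmult_le_compat_l; simpl in HL1; lra).
    nra. }
  assert (hm4 : 0 < m*m*m*m) by (repeat apply Rmult_lt_0_compat; lra).
  apply Rmult_le_reg_r with (m*m*m*m); auto.
  replace ((e0 ^ 2 * E + C * C / (m * m * m * m) * (s * s - 2 * s + 2 * (1 - E))) * (m * m * m * m))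
    with (e0*e0*E*(m*m*m*m) + C*C*(s*s - 2*s + 2*(1-E))) by (field; lra).
  nra.
Qed.
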